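(* Let $\hat e_1,\hat e_2$ be orthonormal vectors, $R_1=-I+2\hat e_1\otimes\hat e_1$, $R_2=-I+2\hat e_2\otimes\hat e_2$, let $V_1\in\mathbb{R}^{3\times3}$ be symmetric positive definite with eigenvalues $\lambda_1,\lambda_2,\lambda_3$ and orthonormal eigenvectors $\hat v_1,\hat v_2,\hat v_3$, and set $V_2=R_1V_1R_1^T$, $V_3=R_2V_2R_2^T$, $V_4=R_2V_1R_2^T$, assumed pairwise distinct. Consider the four twinning equations $$Q_1V_2-V_1=a_1\otimes\hat n_1,\quad Q_2V_3-V_2=a_2\otimes\hat n_2,\quad Q_3V_4-V_3=a_3\otimes\hat n_3,\quad Q_4V_1-V_4=a_4\otimes\hat n_4,$$ where the pairs $(V_1,V_2),(V_2,V_3),(V_3,V_4),(V_4,V_1)$ are related by the $180^\circ$ rotations about $\hat e_1,\hat e_2,\hat e_1,\hat e_2$ respectively. (a) If $(Q_m,a_m,\hat n_m)$, $m=1,\dots,4$, are the Type-I solutions with respect to these axes and $Q_1Q_2Q_3Q_4=I$, then $\sum_{i=1}^3\lambda_i^{-2}(\hat v_i\cdot\hat e_1)(\hat v_i\cdot\hat e_2)=0$ (i.e. $\hat e_1\cdot V_1^{-2}\hat e_2=0$). (b) If instead they are the Type-II solutions with respect to these axes and $Q_1Q_2Q_3Q_4=I$, then $\sum_{i=1}^3\lambda_i^{2}(\hat v_i\cdot\hat e_1)(\hat v_i\cdot\hat e_2)=0$ (i.e. $\hat e_1\cdot V_1^{2}\hat e_2=0$). (c) Let $V_1=\begin{pmatrix}1&0&0\\0&a&b\\0&b&a\end{pmatrix}$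 with $b>0$, positive definite, $\lambda_1=a-b<1<\lambda_3=a+b$, and let $\hat e_1=\frac1{\sqrt2}(1,-1,0)$, $\hat e_2=\frac1{\sqrt2}(1,1,0)$. If $\lambda_3=\lambda_1/\sqrt{2\lambda_1^2-1}$, then the identity in (a) holds; if $\lambda_3=\sqrt{2-\lambda_1^2}$, then the identity in (b) holds.
   Context: For a symmetric positive-definite $W$ and unit vector $\hat e$ with $W':=(-I+2\hat e\otimes\hat e)W(-I+2\hat e\otimes\hat e)\neq W$, the equation $QW'-W=a\otimes\hat n$ ($Q\in SO(3)$) has two solutions: the Type-I solution $\hat n=\hat e$, $a=2\big(\frac{W^{-1}\hat e}{|W^{-1}\hat e|^2}-W\hat e\big)$, $Q=\big(-I+2\frac{W^{-1}\hat e\otimes W^{-1}\hat e}{|W^{-1}\hat e|^2}\big)(-I+2\hat e\otimes\hat e)$; and the Type-II solution, with $a$ parallel to $W\hat e$ and $\hat n$ parallel to $\hat e-\frac{W^2\hat e}{|W\hat e|^2}$, $Q=\big(-I+2\frac{W\hat e\otimes W\hat e}{|W\hat e|^2}\big)(-I+2\hat e\otimes\hat e)$. ''With respect to the axes'' means: equation $m$ uses $W=V_m$ (indices mod 4) and $\hat e=\hat e_1$ for $m=1,3$, $\hat e=\hat e_2$ for $m=2,4$. *)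

(* Defs.v *)
From mathcomp Require Import all_boot all_order all_algebra.
Set Implicit Arguments. Unset Strict Implicit. Unset Printing Implicit Defensive.
Import Order.TTheory GRing.Theory Num.Theory.
Local Open Scope ring_scope.

Section Defs.
Variable R : rcfType.

Definition dotv (u v : 'cV[R]_3) : R := (u^T *m v) 0 0.

Definition tens (a n : 'cV[R]_3) : 'M[R]_3 := a *m n^T.

Definition refl (e : 'cV[R]_3) : 'M[R]_3 := - 1%:M + 2%:R *: tens e e.

Definition reflu (u : 'cV[R]_3) : 'M[R]_3 :=
  - 1%:M + (2%:R / dotv u u) *: tens u u.

Definition conjR (e : 'cV[R]_3) (W : 'M[R]_3) : 'M[R]_3 :=
  refl e *m W *m refl e.

Definition sym_pd (W : 'M[R]_3) : Prop :=
  W^T = W /\ forall x : 'cV[R]_3, x != 0 -> 0 < dotv x (W *m x).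

(* Type-I solution of  Q W' - W = a (x) n  *)
Definition isTypeI (W : 'M[R]_3) (e : 'cV[R]_3) (Q : 'M[R]_3) (a n : 'cV[R]_3) : Prop :=
  let u := invmx W *m e in
  [/\ Q = reflu u *m refl e,
      a = 2%:R *: ((dotv u u)^-1 *: u - W *m e)
    & n = e].

Definition isTypeII (W : 'M[R]_3) (e : 'cV[R]_3) (Q : 'M[R]_3) (a n : 'cV[R]_3) : Prop :=
  let w := W *m e in
  [/\ Q = reflu w *m refl e,
      exists al : R, a = al *: w,
      exists be : R, n = be *: (e - (dotv w w)^-1 *: (W *m w)),
      dotv n n = 1
    & Q *m conjR e W - W = tens a n].

Definition eigendata (V : 'M[R]_3) (lam : 'I_3 -> R) (v : 'I_3 -> 'cV[R]_3) : Prop :=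
  (forall i j, dotv (v i) (v j) = (i == j)%:R) /\
  (forall i, V *m v i = lam i *: v i).

Definition Vc (a b : R) : 'M[R]_3 :=
  \matrix_(i < 3, j < 3)
    nth 0 (nth [::] [:: [:: 1; 0; 0]; [:: 0; a; b]; [:: 0; b; a]] i) j.

Definition e1c : 'cV[R]_3 :=
  \col_(i < 3) nth 0 [:: (Num.sqrt 2%:R)^-1; - (Num.sqrt 2%:R)^-1; 0] i.
Definition e2c : 'cV[R]_3 :=
  \col_(i < 3) nth 0 [:: (Num.sqrt 2%:R)^-1; (Num.sqrt 2%:R)^-1; 0] i.

End Defs.

(* Main.v *)
Require Import Defs.
From mathcomp Require Import all_boot all_order all_algebra ring lra.
Import Order.TTheory GRing.Theory Num.Theory.
Local Open Scope ring_scope.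
Set Implicit Arguments. Unset Strict Implicit. Unset Printing Implicit Defensive.

Lemma dotvE {R : rcfType} (u w : 'cV[R]_3) : dotv u w = \sum_i u i 0 * w i 0.
Proof. by rewrite /dotv mxE; apply: eq_bigr => i _; rewrite mxE. Qed.

Lemma dotvC {R : rcfType} (u w : 'cV[R]_3) : dotv u w = dotv w u.
Proof. by rewrite !dotvE; apply: eq_bigr => i _; rewrite mulrC. Qed.

Lemma mxtr1 {R : rcfType} (u w : 'cV[R]_3) : u^T *m w = (dotv u w)%:M.
Proof. by rewrite /dotv -mx11_scalar. Qed.

Lemma dotv_mull {R : rcfType} (M : 'M[R]_3) (u w : 'cV[R]_3) :
  dotv (M *m u) w = dotv u (M^T *m w).
Proof. by rewrite /dotv trmx_mul mulmxA. Qed.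

Lemma dotvZl {R : rcfType} c (u w : 'cV[R]_3) : dotv (c *: u) w = c * dotv u w.
Proof. by rewrite /dotv linearZ /= -scalemxAl mxE. Qed.

Lemma dotvZr {R : rcfType} c (u w : 'cV[R]_3) : dotv u (c *: w) = c * dotv u w.
Proof. by rewrite dotvC dotvZl dotvC. Qed.

Lemma dotvNl {R : rcfType} (u w : 'cV[R]_3) : dotv (- u) w = - dotv u w.
Proof. by rewrite -scaleN1r dotvZl mulN1r. Qed.

Lemma dotvNr {R : rcfType} (u w : 'cV[R]_3) : dotv u (- w) = - dotv u w.
Proof. by rewrite dotvC dotvNl dotvC. Qed.

Lemma dotvDl {R : rcfType} (u u' w : 'cV[R]_3) : dotv (u + u') w = dotv u w + dotv u' w.
Proof. by rewrite /dotv linearD /= mulmxDl mxE. Qed.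

Lemma dotvDr {R : rcfType} (u u' w : 'cV[R]_3) : dotv w (u + u') = dotv w u + dotv w u'.
Proof. by rewrite dotvC dotvDl !(dotvC w). Qed.

Lemma dotv0l {R : rcfType} (w : 'cV[R]_3) : dotv 0 w = 0.
Proof. by rewrite /dotv linear0 mul0mx mxE. Qed.

Lemma dotv_sum {R : rcfType} (F : 'I_3 -> 'cV[R]_3) w :
  dotv (\sum_i F i) w = \sum_i dotv (F i) w.
Proof.
rewrite !big_ord_recl !big_ord0 !addr0 !dotvDl //.
Qed.

Lemma tens_mul {R : rcfType} (a n x : 'cV[R]_3) : tens a n *m x = dotv n x *: a.
Proof. by rewrite /tens -mulmxA mxtr1 mul_mx_scalar. Qed.

Lemma mul_tens {R : rcfType} (M : 'M[R]_3) (a n : 'cV[R]_3) : M *m tens a n = tens (M *m a) n.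
Proof. by rewrite /tens mulmxA. Qed.

Lemma tens_mulr {R : rcfType} (M : 'M[R]_3) (a n : 'cV[R]_3) : tens a n *m M = tens a (M^T *m n).
Proof. by rewrite /tens -mulmxA trmx_mul trmxK. Qed.

Lemma tens_tens {R : rcfType} (a b c d : 'cV[R]_3) : tens a b *m tens c d = dotv b c *: tens a d.
Proof. by rewrite /tens mulmxA tens_mul scalemxAl. Qed.

Lemma trmx_tens {R : rcfType} (a b : 'cV[R]_3) : (tens a b)^T = tens b a.
Proof. by rewrite /tens trmx_mul trmxK. Qed.

Lemma tensN {R : rcfType} (a : 'cV[R]_3) : tens (- a) (- a) = tens a a.
Proof. by rewrite /tens linearN /= mulmxN mulNmx opprK. Qed.

Lemma refl_tr {R : rcfType} (e : 'cV[R]_3) : (refl e)^T = refl e.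
Proof. by rewrite /refl linearD linearN /= trmx1 linearZ /= trmx_tens. Qed.

Lemma refl_e {R : rcfType} (e : 'cV[R]_3) : dotv e e = 1 -> refl e *m e = e.
Proof.
move=> h; rewrite /refl mulmxDl mulNmx mul1mx -scalemxAl tens_mul h scale1r.
by rewrite scaler_nat mulr2n addrA addNr add0r.
Qed.

Lemma refl_perp {R : rcfType} (e f : 'cV[R]_3) : dotv e f = 0 -> refl e *m f = - f.
Proof.
move=> h; rewrite /refl mulmxDl mulNmx mul1mx -scalemxAl tens_mul h scale0r.
by rewrite scaler0 addr0.
Qed.

Lemma refl_sq {R : rcfType} (e : 'cV[R]_3) : dotv e e = 1 -> refl e *m refl e = 1%:M.
Proof.
move=> h; rewrite {1}/refl mulmxDl mulNmx mul1mx -scalemxAl tens_mulr refl_tr refl_e //.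
by rewrite /refl opprD opprK addrNK.
Qed.

Lemma refl_comm {R : rcfType} (e f : 'cV[R]_3) : dotv e f = 0 ->
  refl e *m refl f = refl f *m refl e.
Proof.
move=> h; rewrite /refl !mulmxDl !mulmxDr !mulNmx !mulmxN !mul1mx !mulmx1 opprK.
rewrite -!scalemxAl -!scalemxAr !tens_tens h dotvC h !scale0r !scaler0 !addr0.
by rewrite addrAC.
Qed.

Lemma reflu_opp {R : rcfType} (u : 'cV[R]_3) : reflu (- u) = reflu u.
Proof. by rewrite /reflu dotvNl dotvNr opprK tensN. Qed.

Lemma reflu_conj {R : rcfType} (Rm : 'M[R]_3) (u : 'cV[R]_3) :
  Rm^T = Rm -> Rm *m Rm = 1%:M -> reflu (Rm *m u) = Rm *m reflu u *m Rm.
Proof.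
move=> hT hsq; rewrite /reflu dotv_mull hT mulmxA hsq mul1mx.
rewrite mulmxDr mulmxN mulmx1 mulmxDl mulNmx hsq; congr (_ + _).
by rewrite -scalemxAr -scalemxAl mul_tens tens_mulr hT.
Qed.

Lemma reflu_sq {R : rcfType} (u : 'cV[R]_3) : dotv u u != 0 -> reflu u *m reflu u = 1%:M.
Proof.
move=> h; rewrite /reflu mulmxDl mulNmx mul1mx mulmxDr mulmxN mulmx1 opprD opprK.
rewrite -scalemxAl -scalemxAr tens_tens scalerA scalerA.
set c := 2%:R / dotv u u; set T := tens u u.
have -> : c * c * dotv u u = c + c.
  by rewrite /c -mulrA mulfVK // mulr_natr mulr2n.
rewrite scalerDl. set X := c *: T. by rewrite addKr subrK.
Qed.

Lemma dotv_eq0 {R : rcfType} (u : 'cV[R]_3) : dotv u u = 0 -> u = 0.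
Proof.
rewrite dotvE => h; apply/matrixP => i j; rewrite ord1 mxE.
have hp : forall i : 'I_3, xpredT i -> 0 <= u i 0 * u i 0.
  by move=> k _; rewrite -expr2 sqr_ge0.
have := psumr_eq0P hp h.
move=> /(_ i isT) /eqP.
by rewrite mulf_eq0 orbb => /eqP.
Qed.

Lemma reflu_mul {R : rcfType} (u x : 'cV[R]_3) :
  reflu u *m x = - x + (2%:R / dotv u u * dotv u x) *: u.
Proof. by rewrite /reflu mulmxDl mulNmx mul1mx -scalemxAl tens_mul scalerA. Qed.

Lemma comm_orth {R : rcfType} (M N : 'M[R]_3) (e1 e2 : 'cV[R]_3) :
  N *m M = 1%:M -> dotv e1 e1 = 1 -> dotv e2 e2 = 1 -> dotv e1 e2 = 0 ->
  reflu (M *m e1) *m reflu (M *m e2) = reflu (M *m e2) *m reflu (M *m e1) ->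
  dotv (M *m e1) (M *m e2) = 0.
Proof.
move=> hNM h11 h22 h12 hc.
set u := M *m e1 in hc *; set w := M *m e2 in hc *.
have hd : forall x y, dotv (M *m x) (N^T *m y) = dotv x y.
  by move=> x y; rewrite dotv_mull mulmxA -trmx_mul hNM trmx1 mul1mx.
have hwz : dotv w (N^T *m e2) = 1 by rewrite hd.
have huz : dotv u (N^T *m e2) = 0 by rewrite hd.
have huz' : dotv u (N^T *m e1) = 1 by rewrite hd.
have hu : dotv u u != 0.
  apply/eqP => /dotv_eq0 h0; move: huz'; rewrite h0 dotv0l => /esym/eqP.
  by rewrite oner_eq0.
have hw : dotv w w != 0.
  apply/eqP => /dotv_eq0 h0; move: hwz; rewrite h0 dotv0l => /esym/eqP.
  by rewrite oner_eq0.
set z := N^T *m e2 in hwz huz.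
have key := congr1 (fun X => dotv w (X *m z)) hc; move: key => /=.
rewrite -!mulmxA !reflu_mul hwz huz !mulr0 scale0r addr0 mulr1.
rewrite !(dotvDr, dotvNr, dotvZr, dotvDl, dotvNl, dotvZl) hwz huz !opprK.
rewrite (dotvC w u).
set a := 2%:R / dotv u u; set b := 2%:R / dotv w w; set c := dotv u w.
have hb : b * dotv w w = 2%:R by rewrite /b mulfVK.
have ha : a != 0 by rewrite /a mulf_neq0 // ?invr_eq0 // pnatr_eq0.
have hb0 : b != 0 by rewrite /b mulf_neq0 // ?invr_eq0 // pnatr_eq0.
rewrite mulrN1 mulNr hb oppr0 add0r => h.
have e : a * b * (c * c) = 0.
  have -> : a * b * (c * c) = a * (b * c) * c by ring.
  lra.
move/eqP: e; rewrite mulf_eq0 (negbTE (mulf_neq0 ha hb0)) /= mulf_eq0 orbb => /eqP //.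
Qed.

Lemma complete {R : rcfType} (v : 'I_3 -> 'cV[R]_3) :
  (forall i j, dotv (v i) (v j) = (i == j)%:R) -> \sum_i tens (v i) (v i) = 1%:M.
Proof.
move=> hon.
pose U : 'M[R]_3 := \matrix_(r, i) v i r 0.
have hU : U^T *m U = 1%:M.
  apply/matrixP => i j; rewrite !mxE -hon dotvE; apply: eq_bigr => k _.
  by rewrite !mxE.
have hU' := mulmx1C hU.
rewrite -hU'; apply/matrixP => r s; rewrite summxE !mxE; apply: eq_bigr => i _.
by rewrite /tens !mxE big_ord1 !mxE.
Qed.

Lemma expand {R : rcfType} (v : 'I_3 -> 'cV[R]_3) (x : 'cV[R]_3) :
  (forall i j, dotv (v i) (v j) = (i == j)%:R) -> x = \sum_i dotv (v i) x *: v i.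
Proof.
move=> hon; rewrite -{1}[x]mul1mx -(complete hon) mulmx_suml.
by apply: eq_bigr => i _; rewrite tens_mul.
Qed.

Lemma eig_dot {R : rcfType} (v : 'I_3 -> 'cV[R]_3) (M : 'M[R]_3) (mu : 'I_3 -> R)
  (x y : 'cV[R]_3) :
  (forall i j, dotv (v i) (v j) = (i == j)%:R) -> (forall i, M *m v i = mu i *: v i) ->
  dotv (M *m x) (M *m y) = \sum_i mu i * mu i * dotv (v i) x * dotv (v i) y.
Proof.
move=> hon heig.
have hM : forall z, M *m z = \sum_i (dotv (v i) z * mu i) *: v i.
  move=> z; rewrite {1}(expand z hon) mulmx_sumr; apply: eq_bigr => i _.
  by rewrite -scalemxAr heig scalerA.
rewrite (hM x) dotv_sum; apply: eq_bigr => i _.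
rewrite dotvZl (hM y) [dotv (v i) (\sum_j _)]dotvC dotv_sum (bigD1 i) //= dotvZl dotvC hon eqxx mulr1.
rewrite big1 ?addr0; first by ring.
by move=> j /negbTE hj; rewrite dotvZl hon hj mulr0.
Qed.

Lemma pd_unit {R : rcfType} (V : 'M[R]_3) (lam : 'I_3 -> R) (v : 'I_3 -> 'cV[R]_3) :
  sym_pd V -> eigendata V lam v -> V \in unitmx.
Proof.
move=> [_ hpd] [hon heig].
have hl : forall i, lam i != 0.
  move=> i; have hv : v i != 0.
    by apply/eqP => h0; move: (hon i i); rewrite h0 dotv0l eqxx => /eqP; rewrite eq_sym oner_eq0.
  have := hpd _ hv; rewrite heig dotvZr hon eqxx mulr1 => hp.
  by rewrite gt_eqF.
pose N0 := \sum_i (lam i)^-1 *: tens (v i) (v i).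
have : V *m N0 = 1%:M.
  rewrite /N0 mulmx_sumr -(complete hon); apply: eq_bigr => i _.
  by rewrite -scalemxAr mul_tens heig /tens -scalemxAl scalerA mulVf // scale1r.
by case/mulmx1_unit.
Qed.

Lemma inv_eig {R : rcfType} (V N : 'M[R]_3) (l : R) (w : 'cV[R]_3) :
  N *m V = 1%:M -> V *m w = l *: w -> dotv w w = 1 -> l != 0 /\ N *m w = l^-1 *: w.
Proof.
move=> hNV hw h1.
have e : w = l *: (N *m w) by rewrite scalemxAr -hw mulmxA hNV mul1mx.
have hl : l != 0.
  apply/eqP => h0; move: h1; rewrite e h0 scale0r dotv0l => /eqP.
  by rewrite eq_sym oner_eq0.
by split => //; rewrite {2}e scalerA mulVf // scale1r.
Qed.

Lemma nz_img {R : rcfType} (M N : 'M[R]_3) (e : 'cV[R]_3) :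
  N *m M = 1%:M -> dotv e e = 1 -> dotv (M *m e) (M *m e) != 0.
Proof.
move=> hNM he; apply/eqP => /dotv_eq0 h0.
have : dotv (M *m e) (N^T *m e) = 1.
  by rewrite dotv_mull mulmxA -trmx_mul hNM trmx1 mul1mx.
by rewrite h0 dotv0l => /esym/eqP; rewrite oner_eq0.
Qed.

Lemma prod_ABAB {R : rcfType} (M M2 M3 M4 : 'M[R]_3) (e1 e2 : 'cV[R]_3) :
  dotv e1 e1 = 1 -> dotv e2 e2 = 1 -> dotv e1 e2 = 0 ->
  M2 = refl e1 *m M *m refl e1 -> M3 = refl e2 *m M2 *m refl e2 ->
  M4 = refl e2 *m M *m refl e2 ->
  reflu (M *m e1) *m refl e1 *m (reflu (M2 *m e2) *m refl e2)
    *m (reflu (M3 *m e1) *m refl e1) *m (reflu (M4 *m e2) *m refl e2)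
  = reflu (M *m e1) *m reflu (M *m e2) *m reflu (M *m e1) *m reflu (M *m e2).
Proof.
move=> h11 h22 h12 hM2 hM3 hM4.
have h21 : dotv e2 e1 = 0 by rewrite dotvC.
have T1 := refl_tr e1; have T2 := refl_tr e2.
have S1 := refl_sq h11; have S2 := refl_sq h22.
have P1 := refl_e h11; have P2 := refl_e h22.
have N12 := refl_perp h12; have N21 := refl_perp h21.
have C := refl_comm h12.
set R1 := refl e1 in T1 S1 P1 N12 C hM2 *.
set R2 := refl e2 in T2 S2 P2 N21 C hM3 hM4 *.
set A := reflu (M *m e1); set B := reflu (M *m e2).
have q2 : reflu (M2 *m e2) = R1 *m B *m R1.
  by rewrite hM2 -!mulmxA N12 !mulmxN reflu_opp reflu_conj // !mulmxA.
have q3 : reflu (M3 *m e1) = R2 *m (R1 *m A *m R1) *m R2.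
  rewrite hM3 hM2 -!mulmxA N21 !mulmxN P1 reflu_opp reflu_conj //.
  by rewrite reflu_conj // !mulmxA.
have q4 : reflu (M4 *m e2) = R2 *m B *m R2.
  by rewrite hM4 -!mulmxA P2 reflu_conj // !mulmxA.
have s1 : forall X : 'M[R]_3, X *m R1 *m R1 = X by move=> X; rewrite -mulmxA S1 mulmx1.
have s2 : forall X : 'M[R]_3, X *m R2 *m R2 = X by move=> X; rewrite -mulmxA S2 mulmx1.
have c21 : forall X : 'M[R]_3, X *m R2 *m R1 = X *m R1 *m R2 by move=> X; rewrite -!mulmxA C.
rewrite q2 q3 q4 !mulmxA.
by rewrite !(s1, s2, c21).
Qed.

Lemma ABAB_comm {R : rcfType} (A B : 'M[R]_3) :
  A *m A = 1%:M -> B *m B = 1%:M -> A *m B *m A *m B = 1%:M -> A *m B = B *m A.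
Proof.
move=> hA hB h.
have h1 : B *m A *m B = A.
  by have := congr1 (mulmx A) h; rewrite mulmx1 !mulmxA hA mul1mx.
have : B *m (B *m A *m B) = B *m A by rewrite h1.
by rewrite !mulmxA hB mul1mx.
Qed.

Lemma core {R : rcfType} (M N M2 M3 M4 : 'M[R]_3) (e1 e2 : 'cV[R]_3) :
  N *m M = 1%:M ->
  dotv e1 e1 = 1 -> dotv e2 e2 = 1 -> dotv e1 e2 = 0 ->
  M2 = refl e1 *m M *m refl e1 -> M3 = refl e2 *m M2 *m refl e2 ->
  M4 = refl e2 *m M *m refl e2 ->
  reflu (M *m e1) *m refl e1 *m (reflu (M2 *m e2) *m refl e2)
    *m (reflu (M3 *m e1) *m refl e1) *m (reflu (M4 *m e2) *m refl e2) = 1%:M ->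
  dotv (M *m e1) (M *m e2) = 0.
Proof.
move=> hNM h11 h22 h12 hM2 hM3 hM4 hQ.
rewrite (prod_ABAB h11 h22 h12 hM2 hM3 hM4) in hQ.
apply: (comm_orth hNM h11 h22 h12).
apply: ABAB_comm hQ; apply: reflu_sq; exact: nz_img hNM _.
Qed.

Lemma inv_conj {R : rcfType} (Rm V : 'M[R]_3) :
  Rm *m Rm = 1%:M -> V \in unitmx ->
  (Rm *m V *m Rm \in unitmx) /\ invmx (Rm *m V *m Rm) = Rm *m invmx V *m Rm.
Proof.
move=> hR hV.
have e : (Rm *m V *m Rm) *m (Rm *m invmx V *m Rm) = 1%:M.
  by rewrite -!mulmxA (mulmxA Rm Rm) hR mul1mx (mulmxA V) mulmxV // mul1mx.
have [hu _] := mulmx1_unit e.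
split => //.
by rewrite -[LHS]mulmx1 -e (mulmxA (invmx _)) mulVmx // mul1mx.
Qed.

Lemma sumconv {R : rcfType} (mu : 'I_3 -> R) (F : 'I_3 -> R) (G : 'I_3 -> R) :
  \sum_i mu i * mu i * F i * G i = \sum_i mu i ^+ 2 * F i * G i.
Proof. by apply: eq_bigr => i _; rewrite expr2. Qed.

Lemma partAB (R : rcfType) :
  (forall (e1 e2 : 'cV[R]_3) (V1 V2 V3 V4 : 'M[R]_3)
          (lam : 'I_3 -> R) (v : 'I_3 -> 'cV[R]_3),
     dotv e1 e1 = 1 -> dotv e2 e2 = 1 -> dotv e1 e2 = 0 ->
     sym_pd V1 -> eigendata V1 lam v ->
     V2 = refl e1 *m V1 *m (refl e1)^T ->
     V3 = refl e2 *m V2 *m (refl e2)^T ->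
     V4 = refl e2 *m V1 *m (refl e2)^T ->
     V1 != V2 -> V1 != V3 -> V1 != V4 -> V2 != V3 -> V2 != V4 -> V3 != V4 ->
     (forall (Q1 Q2 Q3 Q4 : 'M[R]_3) (a1 a2 a3 a4 n1 n2 n3 n4 : 'cV[R]_3),
        isTypeI V1 e1 Q1 a1 n1 -> isTypeI V2 e2 Q2 a2 n2 ->
        isTypeI V3 e1 Q3 a3 n3 -> isTypeI V4 e2 Q4 a4 n4 ->
        Q1 *m Q2 *m Q3 *m Q4 = 1%:M ->
        \sum_(i < 3) lam i ^- 2 * dotv (v i) e1 * dotv (v i) e2 = 0) /\
     (forall (Q1 Q2 Q3 Q4 : 'M[R]_3) (a1 a2 a3 a4 n1 n2 n3 n4 : 'cV[R]_3),
        isTypeII V1 e1 Q1 a1 n1 -> isTypeII V2 e2 Q2 a2 n2 ->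
        isTypeII V3 e1 Q3 a3 n3 -> isTypeII V4 e2 Q4 a4 n4 ->
        Q1 *m Q2 *m Q3 *m Q4 = 1%:M ->
        \sum_(i < 3) lam i ^+ 2 * dotv (v i) e1 * dotv (v i) e2 = 0)).
Proof.
move=> e1 e2 V1 V2 V3 V4 lam v h11 h22 h12 hpd heig hV2 hV3 hV4 _ _ _ _ _ _.
have hu := pd_unit hpd heig.
have [hon hev] := heig.
have hvv : forall i, dotv (v i) (v i) = 1 by move=> i; rewrite hon eqxx.
rewrite !refl_tr in hV2 hV3 hV4.
subst V2 V3 V4.
split.
- move=> Q1 Q2 Q3 Q4 a1 a2 a3 a4 n1 n2 n3 n4 [hQ1 _ _] [hQ2 _ _] [hQ3 _ _] [hQ4 _ _] hQ.
  have [hu2 i2] := inv_conj (refl_sq h11) hu.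
  have [hu3 i3] := inv_conj (refl_sq h22) hu2.
  have [_ i4] := inv_conj (refl_sq h22) hu.
  rewrite hQ1 hQ2 hQ3 hQ4 i3 i2 i4 in hQ.
  have := core (mulmxV hu) h11 h22 h12 erefl erefl erefl hQ.
  rewrite (eig_dot (mu := fun i => (lam i)^-1) _ _ hon) => [h|i]; last first.
    exact: (inv_eig (mulVmx hu) (hev i) (hvv i)).2.
  by rewrite -[RHS]h; apply: eq_bigr => i _; rewrite -exprVn expr2.
- move=> Q1 Q2 Q3 Q4 a1 a2 a3 a4 n1 n2 n3 n4 [hQ1 _ _ _ _] [hQ2 _ _ _ _]
    [hQ3 _ _ _ _] [hQ4 _ _ _ _] hQ.
  rewrite hQ1 hQ2 hQ3 hQ4 in hQ.
  have := core (mulVmx hu) h11 h22 h12 erefl erefl erefl hQ.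
  rewrite (eig_dot _ _ hon hev) => h.
  by rewrite -[RHS]h; apply: eq_bigr => i _; rewrite expr2.
Qed.

Lemma Vc_dot {R : rcfType} (x y : R) :
  dotv (Vc x y *m e1c R) (Vc x y *m e2c R) =
  (Num.sqrt 2%:R)^-1 ^+ 2 * (1 - x ^+ 2 - y ^+ 2).
Proof.
rewrite dotvE !big_ord_recl big_ord0 !mxE !big_ord_recl !big_ord0 !mxE /=.
by ring.
Qed.

Lemma Vc_inv {R : rcfType} (a b : R) : a ^+ 2 - b ^+ 2 != 0 ->
  Vc (a / (a ^+ 2 - b ^+ 2)) (- b / (a ^+ 2 - b ^+ 2)) *m Vc a b = 1%:M.
Proof.
move=> hd; apply/matrixP => i j; rewrite !mxE !big_ord_recl big_ord0 !mxE.
case: i => [[|[|[|?]]] ?]; case: j => [[|[|[|?]]] ?] //=; try ring.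
all: by field.
Qed.

Lemma partC (R : rcfType) :
  (forall (a b : R) (lam : 'I_3 -> R) (v : 'I_3 -> 'cV[R]_3),
     0 < b -> sym_pd (Vc a b) -> a - b < 1 -> 1 < a + b ->
     eigendata (Vc a b) lam v ->
     (a + b = (a - b) / Num.sqrt (2%:R * (a - b) ^+ 2 - 1) ->
        \sum_(i < 3) lam i ^- 2 * dotv (v i) (e1c R) * dotv (v i) (e2c R) = 0) /\
     (a + b = Num.sqrt (2%:R - (a - b) ^+ 2) ->
        \sum_(i < 3) lam i ^+ 2 * dotv (v i) (e1c R) * dotv (v i) (e2c R) = 0)).
Proof.
move=> a b lam v hb _ hlt hgt [hon hev].
have hvv : forall i, dotv (v i) (v i) = 1 by move=> i; rewrite hon eqxx.
split.
- move=> hc.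
  set t := 2%:R * (a - b) ^+ 2 - 1 in hc.
  have ht : 0 < t.
    rewrite ltNge; apply/negP => ht; move: hc.
    rewrite ler0_sqrtr // invr0 mulr0 => hq; lra.
  have hr : 0 < Num.sqrt t by rewrite sqrtr_gt0.
  have hr2 : Num.sqrt t ^+ 2 = t by rewrite sqr_sqrtr // ltW.
  have hpq : (a + b) * Num.sqrt t = a - b by rewrite hc mulfVK // gt_eqF.
  have hp : 0 < a - b by rewrite -hpq mulr_gt0 //; lra.
  have hd : a ^+ 2 - b ^+ 2 != 0.
    have -> : a ^+ 2 - b ^+ 2 = (a - b) * (a + b) by ring.
    by rewrite gt_eqF // mulr_gt0 //; lra.
  have hrel : (a + b) ^+ 2 * t = (a - b) ^+ 2.
    by rewrite -hr2 -exprMn hpq.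
  have hNV := Vc_inv hd.
  set N := Vc _ _ in hNV.
  have := eig_dot (mu := fun i => (lam i)^-1) (e1c R) (e2c R) hon
    (fun i => (inv_eig hNV (hev i) (hvv i)).2).
  rewrite /N Vc_dot.
  have -> : 1 - (a / (a ^+ 2 - b ^+ 2)) ^+ 2 - (- b / (a ^+ 2 - b ^+ 2)) ^+ 2
      = ((a + b) ^+ 2 * t - (a - b) ^+ 2) / (2%:R * (a ^+ 2 - b ^+ 2) ^+ 2).
    by rewrite /t; field.
  rewrite hrel subrr mul0r mulr0 => h.
  by rewrite [RHS]h; apply: eq_bigr => i _; rewrite -exprVn expr2.
- move=> hc.
  set t := 2%:R - (a - b) ^+ 2 in hc.
  have ht : 0 <= t.
    rewrite leNgt; apply/negP => ht; move: hc.
    rewrite ler0_sqrtr ?ltW // => hq; lra.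
  have hr2 : Num.sqrt t ^+ 2 = t by rewrite sqr_sqrtr.
  have hrel : (a + b) ^+ 2 = t by rewrite hc.
  have := eig_dot (e1c R) (e2c R) hon hev.
  rewrite Vc_dot.
  have -> : 1 - a ^+ 2 - b ^+ 2 = (t - (a + b) ^+ 2) / 2%:R.
    by rewrite /t; field.
  rewrite hrel subrr mul0r mulr0 => h.
  by rewrite [RHS]h; apply: eq_bigr => i _; rewrite expr2.
Qed.
Unset Implicit Arguments.
Theorem mainTheorem10 (R : rcfType) :
  (forall (e1 e2 : 'cV[R]_3) (V1 V2 V3 V4 : 'M[R]_3)
          (lam : 'I_3 -> R) (v : 'I_3 -> 'cV[R]_3),
     dotv e1 e1 = 1 -> dotv e2 e2 = 1 -> dotv e1 e2 = 0 ->
     sym_pd V1 -> eigendata V1 lam v ->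
     V2 = refl e1 *m V1 *m (refl e1)^T ->
     V3 = refl e2 *m V2 *m (refl e2)^T ->
     V4 = refl e2 *m V1 *m (refl e2)^T ->
     V1 != V2 -> V1 != V3 -> V1 != V4 -> V2 != V3 -> V2 != V4 -> V3 != V4 ->
     (* (a) Type-I solutions *)
     (forall (Q1 Q2 Q3 Q4 : 'M[R]_3) (a1 a2 a3 a4 n1 n2 n3 n4 : 'cV[R]_3),
        isTypeI V1 e1 Q1 a1 n1 -> isTypeI V2 e2 Q2 a2 n2 ->
        isTypeI V3 e1 Q3 a3 n3 -> isTypeI V4 e2 Q4 a4 n4 ->
        Q1 *m Q2 *m Q3 *m Q4 = 1%:M ->
        \sum_(i < 3) lam i ^- 2 * dotv (v i) e1 * dotv (v i) e2 = 0) /\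
     (* (b) Type-II solutions *)
     (forall (Q1 Q2 Q3 Q4 : 'M[R]_3) (a1 a2 a3 a4 n1 n2 n3 n4 : 'cV[R]_3),
        isTypeII V1 e1 Q1 a1 n1 -> isTypeII V2 e2 Q2 a2 n2 ->
        isTypeII V3 e1 Q3 a3 n3 -> isTypeII V4 e2 Q4 a4 n4 ->
        Q1 *m Q2 *m Q3 *m Q4 = 1%:M ->
        \sum_(i < 3) lam i ^+ 2 * dotv (v i) e1 * dotv (v i) e2 = 0)) /\
  (* (c) *)
  (forall (a b : R) (lam : 'I_3 -> R) (v : 'I_3 -> 'cV[R]_3),
     0 < b -> sym_pd (Vc a b) -> a - b < 1 -> 1 < a + b ->
     eigendata (Vc a b) lam v ->
     (a + b = (a - b) / Num.sqrt (2%:R * (a - b) ^+ 2 - 1) ->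
        \sum_(i < 3) lam i ^- 2 * dotv (v i) (e1c R) * dotv (v i) (e2c R) = 0) /\
     (a + b = Num.sqrt (2%:R - (a - b) ^+ 2) ->
        \sum_(i < 3) lam i ^+ 2 * dotv (v i) (e1c R) * dotv (v i) (e2c R) = 0)).
Proof. split; [exact: partAB | exact: partC]. Qed.
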